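(* Let $P$ be a set of $n\geq 5$ points in general position in the plane and let $\mathcal{P}$ be the set of all closed segments with both endpoints in $P$. If $\mathcal{P}$ contains $5$ pairwise disjoint segments each of which is clean in $\mathcal{P}$, then $\mu(D(P))\geq\binom{n}{2}-5$.
   Context: General position means no three points collinear. Two segments of $\mathcal{P}$ cross if they meet in a single point that is interior to both; a segment of $\mathcal{P}$ is clean in $\mathcal{P}$ if no other segment of $\mathcal{P}$ crosses it. $D(P)$ is the graph with vertex set $\mathcal{P}$, two segments adjacent iff disjoint. For a graph $G$ and $U\subseteq V(G)$, two distinct vertices $x,y\in U$ are $U$-mutually visible if $G$ contains a shortest $x$-$y$ path none of whose internal vertices lies in $U$; $U$ is a mutual-visibility set if every two distinct vertices of $U$ are $U$-mutually visible. $\mu(G)$ is the maximum size of a mutual-visibility set of $G$. *)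

(* Defs.v *)
From HB Require Import structures.
From mathcomp Require Import all_boot all_order all_algebra.
Set Implicit Arguments. Unset Strict Implicit. Unset Printing Implicit Defensive.
Import Order.TTheory GRing.Theory Num.Theory.
Local Open Scope ring_scope.

Section Geometry.
Variable R : realFieldType.
Definition pt := (R * R)%type.

Definition orient (a b c : pt) : R :=
  (b.1 - a.1) * (c.2 - a.2) - (b.2 - a.2) * (c.1 - a.1).
Definition collinear (a b c : pt) : Prop := orient a b c = 0.

Definition on_cseg (a b x : pt) : Prop :=
  exists t : R, 0 <= t <= 1 /\
    x = ((1 - t) * a.1 + t * b.1, (1 - t) * a.2 + t * b.2).
Definition on_oseg (a b x : pt) : Prop :=
  exists t : R, 0 < t < 1 /\
    x = ((1 - t) * a.1 + t * b.1, (1 - t) * a.2 + t * b.2).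

Definition seg_cross (a b c d : pt) : Prop :=
  exists x : pt, (forall y, (on_cseg a b y /\ on_cseg c d y) <-> y = x) /\
    on_oseg a b x /\ on_oseg c d x.
Definition seg_disjoint (a b c d : pt) : Prop :=
  forall y, ~ (on_cseg a b y /\ on_cseg c d y).
End Geometry.

(* point set P = image of p : 'I_n -> pt; general position *)
Definition general_position (R : realFieldType) (n : nat) (p : 'I_n -> pt R) : Prop :=
  forall i j k : 'I_n, i != j -> j != k -> i != k -> ~ collinear (p i) (p j) (p k).

(* the segments of P: unordered pairs {i,j}, represented with i < j *)
Definition seg (n : nat) := {e : 'I_n * 'I_n | (e.1 < e.2)%N}.

Definition seg_crossP (R : realFieldType) (n : nat) (p : 'I_n -> pt R) (s t : seg n) : Prop :=
  seg_cross (p (val s).1) (p (val s).2) (p (val t).1) (p (val t).2).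
Definition seg_disjointP (R : realFieldType) (n : nat) (p : 'I_n -> pt R) (s t : seg n) : Prop :=
  seg_disjoint (p (val s).1) (p (val s).2) (p (val t).1) (p (val t).2).

Definition clean (R : realFieldType) (n : nat) (p : 'I_n -> pt R) (s : seg n) : Prop :=
  forall t : seg n, t != s -> ~ seg_crossP p s t.

Section Visibility.
Variables (V : finType) (e : V -> V -> Prop).

(* a walk x -> v1 -> ... -> vk = y is the sequence [:: v1; ...; vk] *)
Definition walk (x y : V) (s : seq V) : Prop :=
  (forall i, (i < size s)%N -> e (nth x (x :: s) i) (nth x s i)) /\ last x s = y.
Definition shortest_walk (x y : V) (s : seq V) : Prop :=
  walk x y s /\ forall s' : seq V, walk x y s' -> (size s <= size s')%N.
Definition internal (x : V) (s : seq V) : seq V := behead (belast x s).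

Definition mutually_visible (U : {set V}) (x y : V) : Prop :=
  exists s : seq V, shortest_walk x y s /\ all (fun v => v \notin U) (internal x s).
Definition mv_set (U : {set V}) : Prop :=
  forall x y : V, x \in U -> y \in U -> x != y -> mutually_visible U x y.
(* mu(G) >= k, i.e. the maximum size of a mutual-visibility set is at least k *)
Definition mu_ge (k : nat) : Prop := exists U : {set V}, mv_set U /\ (k <= #|U|)%N.
End Visibility.

(* Main.v *)
Require Import Defs.
From mathcomp Require Import all_boot all_order all_algebra ring.
Set Implicit Arguments. Unset Strict Implicit. Unset Printing Implicit Defensive.
Import Order.TTheory GRing.Theory Num.Theory.

Lemma card_seg n : #|{: seg n}| = 'C(n,2).
Proof.
rewrite -card_ltn_sorted_tuples -cardsT.
pose f (s : seg n) : 2.-tuple 'I_n := [tuple (val s).1; (val s).2].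
have finj : injective f.
  move=> [[a1 b1] h1] [[a2 b2] h2] /(congr1 val) /= [E1 E2].
  by apply: val_inj => /=; rewrite E1 E2.
rewrite -(card_imset _ finj); apply: eq_card => t.
rewrite inE; apply/imsetP/idP.
  by move=> [s _ ->] /=; rewrite andbT; exact: (valP s).
case: t => [[|a [|b [|]]] //= Hs] Ht.
have ab : (a, b).1 < (a, b).2 by move: Ht; rewrite /= andbT.
exists (exist _ (a, b) ab) => //.
exact: val_inj.
Qed.

Local Open Scope ring_scope.
Section G.
Variable R : realFieldType.

Lemma key (a b c d : pt R) t u t' u' :
  (1-t)*a.1+t*b.1 = (1-u)*c.1+u*d.1 ->
  (1-t)*a.2+t*b.2 = (1-u)*c.2+u*d.2 ->
  (1-t')*a.1+t'*b.1 = (1-u')*c.1+u'*d.1 ->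
  (1-t')*a.2+t'*b.2 = (1-u')*c.2+u'*d.2 ->
  (t - t') * orient a b c = 0.
Proof.
move=> /eqP; rewrite -subr_eq0 => /eqP E1.
move=> /eqP; rewrite -subr_eq0 => /eqP E2.
move=> /eqP; rewrite -subr_eq0 => /eqP E3.
move=> /eqP; rewrite -subr_eq0 => /eqP E4.
set e1 := (_ - _) in E1. set e2 := (_ - _) in E2.
set e3 := (_ - _) in E3. set e4 := (_ - _) in E4.
rewrite /orient.
transitivity ((t-t')*(b.2-a.2)*e1 - (t-t')*(b.1-a.1)*e2
   - u*((e1-e3)*(d.2-c.2) - (e2-e4)*(d.1-c.1))).
  rewrite /e1 /e2 /e3 /e4; ring.
by rewrite E1 E2 E3 E4; ring.
Qed.

Lemma online_col (c d a : pt R) u :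
  a.1 = (1-u)*c.1+u*d.1 -> a.2 = (1-u)*c.2+u*d.2 -> orient c d a = 0.
Proof. by move=> h1 h2; rewrite /orient h1 h2; ring. Qed.

Lemma meet_cross (a b c d : pt R) :
  ~ collinear a b c -> ~ collinear a b d -> ~ collinear c d a -> ~ collinear c d b ->
  (exists y, on_cseg a b y /\ on_cseg c d y) -> seg_cross a b c d.
Proof.
move=> nABC nABD nCDA nCDB [x [[t [/andP[t0 t1] Hx]] [u [/andP[u0 u1] Hx']]]].
rewrite Hx in Hx'; case: Hx' => E1 E2.
exists x; split; [|split].
- move=> y; split.
    case=> [[t' [_ Hy]] [u' [_ Hy']]].
    rewrite Hy in Hy'; case: Hy' => E3 E4.
    have := key E1 E2 E3 E4; move/eqP; rewrite mulf_eq0 => /orP[|/eqP //].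
      by rewrite subr_eq0 => /eqP tt; rewrite Hy Hx tt.
  move=> ->; split.
    by exists t; rewrite t0 t1 Hx.
  by exists u; rewrite u0 u1 Hx E1 E2.
- exists t; split; last exact: Hx; rewrite !lt_def t0 t1 !andbT; apply/andP; split.
    apply/eqP => tt; apply: nCDA; apply: (online_col (u:=u)).
      by rewrite -E1 tt; ring.
    by rewrite -E2 tt; ring.
  apply/eqP => tt; apply: nCDB; apply: (online_col (u:=u)).
    by rewrite -E1 -tt; ring.
  by rewrite -E2 -tt; ring.
- exists u; split; last by rewrite Hx E1 E2.
   rewrite !lt_def u0 u1 !andbT; apply/andP; split.
    apply/eqP => tt; apply: nABC; apply: (online_col (u:=t)).
      by rewrite E1 tt; ring.
    by rewrite E2 tt; ring.
  apply/eqP => tt; apply: nABD; apply: (online_col (u:=t)).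
    by rewrite E1 -tt; ring.
  by rewrite E2 -tt; ring.
Qed.

Lemma on_end (a b : pt R) : on_cseg a b a /\ on_cseg a b b.
Proof.
split.
  exists 0; split; first by rewrite lexx ler01.
  by case: a => a1 a2 /=; congr (_, _); ring.
exists 1; split; first by rewrite lexx ler01.
by case: b => b1 b2 /=; congr (_, _); ring.
Qed.
End G.

From Stdlib Require Import Classical.

Section Main.
Variables (R : realFieldType) (n : nat) (p : 'I_n -> (R * R)%type).

Definition ends (s : seg n) : {set 'I_n} := [set (val s).1; (val s).2].

Lemma on_ends (s : seg n) i : i \in ends s -> on_cseg (p (val s).1) (p (val s).2) (p i).
Proof. by case/set2P => ->; have [] := on_end (p (val s).1) (p (val s).2). Qed.

Lemma share (s t : seg n) i : i \in ends s -> i \in ends t -> ~ seg_disjointP p s t.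
Proof. by move=> Hs Ht D; apply: (D (p i)); split; apply: on_ends. Qed.

Lemma disj_sym (s t : seg n) : seg_disjointP p s t -> seg_disjointP p t s.
Proof. by move=> D y [H1 H2]; apply: (D y). Qed.

Lemma ord_ne (i j : 'I_n) : (i < j)%N -> i != j.
Proof. by move=> h; apply/eqP => E; rewrite E ltnn in h. Qed.

Lemma disj_clean (s t : seg n) : general_position p -> clean p s -> t != s ->
  (forall i, i \in ends s -> i \notin ends t) -> seg_disjointP p s t.
Proof.
move=> gp cl ts dj y [H1 H2]; apply: (cl t ts).
have nab := ord_ne (valP s); have ncd := ord_ne (valP t).
have := dj _ (set21 (val s).1 (val s).2); rewrite !inE negb_or => /andP[nac nad].
have := dj _ (set22 (val s).1 (val s).2); rewrite !inE negb_or => /andP[nbc nbd].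
apply: meet_cross.
- by apply: gp.
- by apply: gp.
- by apply: gp; rewrite // eq_sym.
- by apply: gp; rewrite // eq_sym.
- by exists y.
Qed.
End Main.

Theorem proposition11 (R : realFieldType) (n : nat) (p : 'I_n -> (R * R)%type) :
  (5 <= n)%N ->
  injective p ->
  general_position p ->
  (exists S : {set seg n},
      #|S| = 5%N /\
      (forall s t, s \in S -> t \in S -> s != t -> seg_disjointP p s t) /\
      (forall s, s \in S -> clean p s)) ->
  mu_ge (fun s t : seg n => seg_disjointP p s t) ('C(n, 2) - 5).
Proof.
move=> n5 _ gp [S [cS [dS clS]]].
exists (~: S); split; last first.
  by have := cardsC S; rewrite cS card_seg => <-; rewrite addKn.
move=> x y; rewrite !inE => xU yU xy.
case: (classic (seg_disjointP p x y)) => [D|ND].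
  exists [:: y]; split; last by [].
  split.
    split; last by [].
    by case=> [|//] _.
  case=> [[_ /= E0]|//]; by rewrite E0 eqxx in xy.
pose E := ends x :|: ends y.
have [s sS sE] : exists2 s, s \in S & forall i, i \in ends s -> i \notin E.
  apply: NNPP => Hn.
  have Hs : forall s, s \in S -> ends s :&: E != set0.
    move=> s sS; apply/negP => /eqP H0; apply: Hn; exists s => // i Hi; apply/negP => HE.
    by have := in_setI i (ends s) E; rewrite H0 inE Hi HE.
  pose f s := odflt (val x).1 [pick i in ends s :&: E].
  have fP : forall s, s \in S -> f s \in ends s :&: E.
    move=> s sS; rewrite /f; case: pickP => [i Hi //|H].
    by case/set0Pn: (Hs s sS) => i; rewrite H.
  have finj : {in S &, injective f}.
    move=> s1 s2 s1S s2S E12; apply/eqP; apply/negPn/negP => ne.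
    have := fP _ s1S; have := fP _ s2S; rewrite -E12 => /setIP[h2 _] /setIP[h1 _].
    by apply: (share h1 h2); apply: dS.
  have : (#|f @: S| <= #|E|)%N.
    apply: subset_leq_card; apply/subsetP => i /imsetP[s sS ->].
    by have := fP _ sS; rewrite inE => /andP[].
  rewrite card_in_imset // cS => h.
  have : (#|E| <= 4)%N.
    apply: leq_trans (leq_card_setU _ _) _.
    by rewrite !cards2; case: (_ != _); case: (_ != _).
  by move=> h'; have := leq_trans h h'.
have sx : x != s by apply/eqP => E0; rewrite E0 sS in xU.
have sy : y != s by apply/eqP => E0; rewrite E0 sS in yU.
have Dsx : seg_disjointP p s x.
  apply: disj_clean => //; first exact: clS.
  move=> i Hi; have := sE i Hi; rewrite inE negb_or => /andP[]; by [].
have Dsy : seg_disjointP p s y.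
  apply: disj_clean => //; first exact: clS.
  move=> i Hi; have := sE i Hi; rewrite inE negb_or => /andP[]; by [].
exists [:: s; y]; split; last by rewrite /= inE negbK sS.
split.
  split; last by [].
  case=> [_|[_|//]] /=; first exact: disj_sym.
  exact: Dsy.
case=> [|z [|w l]] //.
  by move=> [_ /= E0]; rewrite E0 eqxx in xy.
move=> [H /= Hl]; have := H 0%N erefl; rewrite /= Hl. by move/ND.
Qed.
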